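(* Let $f^*$ be any maximum flow in $\mathcal{H}$. Let $V_1\subseteq V$ be nonempty with $\rho_h(V_1)=\rho_h^*$, and let $\Lambda_1=\{\lambda\in\Lambda:\lambda\subseteq V_1\}$. Then for every non-trivial component $C$ of $\mathcal{H}_{f^*}$, either $C\subseteq V_1\cup\Lambda_1$ or $C\cap(V_1\cup\Lambda_1)=\emptyset$.
   Context: Let $G=(V,E)$ be a finite simple undirected graph and $h\ge2$. An $h$-clique is a set of $h$ pairwise adjacent nodes; $\mu_h(G[W])$ counts $h$-cliques inside $W$; for nonempty $W$, $\rho_h(W)=\mu_h(G[W])/|W|$; $\rho_h^*=\max_{\emptyset\ne W\subseteq V}\rho_h(W)$; $deg_G(v,h)$ is the number of $h$-cliques containing $v$; $\Lambda$ is the set of $(h-1)$-cliques of $G$ contained in some $h$-clique. Flow network $\mathcal{H}=(V_\mathcal{H},E_\mathcal{H},c)$: $V_\mathcal{H}=V\cup\Lambda\cup\{s,t\}$; for $v\in V$: arcs $(s,v)$ cap. $deg_G(v,h)$, $(v,t)$ cap. $h\rho_h^*$, $(v,s),(t,v)$ cap. $0$; for $\lambda\in\Lambda$, $v\in\lambda$: $(\lambda,v)$ cap. $+\infty$, $(v,\lambda)$ cap. $0$; for $\lambda\in\Lambda$, $v\in V$ with $\lambda\cup\{v\}$ an $h$-clique: $(v,\lambda)$ cap. $1$, $(\lambda,v)$ cap. $0$; no other arcs. A flow $f$ satisfies $f(u,v)\le c(u,v)$, $f(v,u)=-f(u,v)$, conservation at nodes other than $s,t$; value $\sum_v f(s,v)$.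 The residual graph $\mathcal{H}_{f}$ has an arc $(u,v)$ whenever $(u,v)\in E_\mathcal{H}$ and $c(u,v)-f(u,v)>0$. A non-trivial component is a strongly connected component of $\mathcal{H}_{f^*}$ containing neither $s$ nor $t$. *)

(* Defs.v *)
From HB Require Import structures.
From mathcomp Require Import all_boot all_order all_algebra.
Set Implicit Arguments. Unset Strict Implicit. Unset Printing Implicit Defensive.
Import Order.TTheory GRing.Theory Num.Theory.
Local Open Scope ring_scope.

Section Defs.
Variables (V : finType) (e : rel V) (h : nat) (R : realFieldType).

Definition is_clique (S : {set V}) : bool :=
  [forall x in S, forall y in S, (x != y) ==> e x y].

Definition hcliques : {set {set V}} :=
  [set S : {set V} | is_clique S & #|S| == h].

Definition mu (W : {set V}) : nat := #|[set S in hcliques | S \subset W]|.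

Definition rho (W : {set V}) : R := (mu W)%:R / (#|W|)%:R.

(* rho_h^* = max over nonempty W of rho_h(W)  (all rho values are >= 0) *)
Definition rho_star : R := \big[Num.max/0]_(W : {set V} | W != set0) rho W.

Definition hdeg (v : V) : nat := #|[set S in hcliques | v \in S]|.

Definition Lam : {set {set V}} :=
  [set L : {set V} | [&& is_clique L, #|L| == h.-1 &
                        [exists S in hcliques, L \subset S]]].

Definition lamT := {L : {set V} | L \in Lam}.

(* nodes of the flow network: inl true = s, inl false = t,
   inr (inl v) = v in V, inr (inr L) = lambda in Lambda *)
Definition node := (bool + (V + lamT))%type.
Definition src : node := inl true.
Definition snk : node := inl false.

Definition arcH (u w : node) : bool :=
  match u, w with
  | inl true, inr (inl _) => true
  | inr (inl _), inl false => true
  | inr (inl _), inl true => true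
  | inl false, inr (inl _) => true
  | inr (inr L), inr (inl v) => (v \in val L) || (v |: val L \in hcliques)
  | inr (inl v), inr (inr L) => (v \in val L) || (v |: val L \in hcliques)
  | _, _ => false
  end.

(* capacities; None stands for +infinity; non-arcs get capacity 0 *)
Definition capH (u w : node) : option R :=
  match u, w with
  | inl true, inr (inl v) => Some (hdeg v)%:R
  | inr (inl _), inl false => Some (h%:R * rho_star)
  | inr (inr L), inr (inl v) => if v \in val L then None else Some 0
  | inr (inl v), inr (inr L) =>
      if (v \notin val L) && (v |: val L \in hcliques) then Some 1 else Some 0
  | _, _ => Some 0
  end.

Definition le_cap (x : R) (c : option R) : Prop :=
  match c with None => True | Some c => x <= c end.

Definition is_flow (f : node -> node -> R) : Prop :=
  [/\ forall u w, le_cap (f u w) (capH u w),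
      forall u w, f w u = - f u w &
      forall u, u != src -> u != snk -> \sum_(w : node) f u w = 0].

Definition flow_value (f : node -> node -> R) : R :=
  \sum_(v : V) f src (inr (inl v)).

Definition is_max_flow (f : node -> node -> R) : Prop :=
  is_flow f /\ forall g, is_flow g -> flow_value g <= flow_value f.

Definition residual (f : node -> node -> R) : rel node :=
  fun u w => arcH u w &&
    match capH u w with None => true | Some c => f u w < c end.

Definition is_scc (r : rel node) (C : {set node}) : Prop :=
  exists x, C = [set y | connect r x y && connect r y x].

Definition nontrivial_component (f : node -> node -> R) (C : {set node}) : Prop :=
  is_scc (residual f) C /\ src \notin C /\ snk \notin C.

Definition V1Lam1 (V1 : {set V}) : {set node} :=
  [set u : node | match u with
                  | inr (inl v) => v \in V1
                  | inr (inr L) => val L \subset V1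
                  | _ => false end].

End Defs.

(* Main.v *)
Require Import Defs.
From mathcomp Require Import all_boot all_order all_algebra.
From mathcomp Require Import ring lra.
Import Order.TTheory GRing.Theory Num.Theory.
Set Implicit Arguments. Unset Strict Implicit. Unset Printing Implicit Defensive.
Local Open Scope ring_scope.

Section Comb.
Variables (V : finType) (e : rel V) (h : nat).
Local Notation hcl := (hcliques e h).

Lemma sum_bool_card (I : finType) (P Q : pred I) :
  (\sum_(i | P i) (Q i : nat))%N = #|[set i | P i && Q i]|.
Proof.
rewrite -sum1_card [RHS]big_mkcond [LHS]big_mkcond; apply: eq_bigr => i _.
by rewrite inE; case: (P i); case: (Q i).
Qed.

Lemma double_count (F : {set {set V}}) :
  (forall S, S \in F -> #|S| = h) ->
  (\sum_v #|[set S in F | v \in S]|)%N = (h * #|F|)%N.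
Proof.
move=> Fh.
rewrite (eq_bigr (fun v => \sum_(S in F) (v \in S : nat)))%N; last first.
  by move=> v _; rewrite sum_bool_card; apply: eq_card => S; rewrite !inE.
rewrite exchange_big /= (eq_bigr (fun _ => h)); first by rewrite sum_nat_const mulnC.
move=> S SF; rewrite -(Fh S SF) -sum1_card [RHS]big_mkcond /=.
by apply: eq_bigr => v _; case: (v \in S).
Qed.

Lemma clique_sub (S L : {set V}) : is_clique e S -> L \subset S -> is_clique e L.
Proof.
move=> /forall_inP cS sLS; apply/forall_inP => x xL; apply/forall_inP => y yL.
have /forall_inP := cS x (subsetP sLS x xL); apply; exact: subsetP sLS y yL.
Qed.

Definition inW (W : {set V}) v := #|[set S in hcl | (v \in S) && (S \subset W)]|.
Definition outW (W : {set V}) v := #|[set S in hcl | (v \in S) && ~~ (S \subset W)]|.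

Lemma hdeg_split W v : hdeg e h v = (inW W v + outW W v)%N.
Proof.
rewrite /hdeg -(cardsID [set S : {set V} | S \subset W]).
by congr (_ + _)%N; apply: eq_card => S; rewrite !inE;
  case: (is_clique e S); case: (#|S| == h); case: (v \in S); case: (S \subset W).
Qed.

Lemma sum_inW W : (\sum_v inW W v)%N = (h * mu e h W)%N.
Proof.
rewrite /mu -double_count; last by move=> S; rewrite !inE => /andP[/andP[_ /eqP]].
apply: eq_bigr => v _; apply: eq_card => S; rewrite !inE.
by case: (is_clique e S); case: (#|S| == h); case: (v \in S); case: (S \subset W).
Qed.

Lemma count_out (W : {set V}) v : v \in W ->
  (\sum_(L : lamT e h | ~~ (val L \subset W))
     ((v \notin val L) && (v |: val L \in hcl) : nat))%N = outW W v.
Proof.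
move=> vW; rewrite sum_bool_card.
set D := [set L | _].
have inj : {in D &, injective (fun L : lamT e h => v |: val L)}.
  move=> L1 L2; rewrite !inE => /andP[_ /andP[n1 _]] /andP[_ /andP[n2 _]] E.
  by apply: val_inj; rewrite -(setU1K n1) -(setU1K n2) E.
rewrite -(card_in_imset inj); apply: eq_card => S; rewrite inE.
apply/imsetP/idP.
  move=> [L]; rewrite inE => /andP[nLW /andP[nvL Sc]] ->.
  rewrite Sc setU11 /= subUset negb_and nLW orbT; done.
move=> /andP[Sc /andP[vS nSW]].
have L0lam : S :\ v \in Lam e h.
  move: (Sc); rewrite inE => /andP[cS /eqP cardS].
  rewrite inE (clique_sub cS (subsetDl _ _)) /=.
  apply/andP; split.
    by rewrite (cardsD1 v S) vS add1n in cardS; rewrite -cardS.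
  by apply/existsP; exists S; rewrite Sc subsetDl.
exists (exist _ (S :\ v) L0lam) => /=; last by rewrite setD1K.
rewrite inE /= setD11 /= setD1K // Sc andbT.
apply: contra nSW => sub; rewrite -(setD1K vS) subUset sub andbT sub1set //.
Qed.

End Comb.

Section Flow.
Variables (V : finType) (e : rel V) (h : nat) (R : realFieldType).
Local Notation nd := (node e h).
Local Notation s := (@src V e h).
Local Notation t := (@snk V e h).

Definition capv (u w : nd) : R := if capH R u w is Some c then c else 0.

Lemma arcH_sym (u w : nd) : arcH u w = arcH w u.
Proof. case: u => [[]|[v|L]]; case: w => [[]|[v'|L']]; reflexivity. Qed.

Lemma nonarc_cap (u w : nd) : ~~ arcH u w -> capH R u w = Some 0.
Proof.
case: u => [[]|[v|L]]; case: w => [[]|[v'|L']] //=.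
- by rewrite negb_or => /andP[/negbTE -> /negbTE ->].
- by rewrite negb_or => /andP[/negbTE -> _].
Qed.

Lemma none_arc (u w : nd) : capH R u w = None -> arcH u w.
Proof.
case: u => [[]|[v|L]]; case: w => [[]|[v'|L']] //=.
- by case: ifP.
- by case: ifP => // ->.
Qed.

Lemma flow_nonarc (f : nd -> nd -> R) u w : is_flow f -> ~~ arcH u w -> f u w = 0.
Proof.
move=> [cap anti _] na.
have c1 := cap u w. have c2 := cap w u.
rewrite (nonarc_cap na) in c1.
have na' : ~~ arcH w u by rewrite arcH_sym.
rewrite (nonarc_cap na') anti in c2.
simpl in c1, c2.
by apply/eqP; rewrite eq_le c1 /= -oppr_le0.
Qed.

Lemma flow_le_capv (f : nd -> nd -> R) u w : is_flow f -> capH R u w != None ->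
  f u w <= capv u w.
Proof.
move=> [cap _ _]; have := cap u w; rewrite /capv.
by case: (capH R u w).
Qed.

Lemma valueE (f : nd -> nd -> R) : is_flow f -> \sum_w f s w = flow_value f.
Proof.
move=> fl; rewrite big_sumType /= big_bool /= big_sumType /=.
rewrite (flow_nonarc fl) // (flow_nonarc fl) //.
rewrite [X in _ + (_ + X)]big1 ?add0r ?addr0 //.
by move=> L _; rewrite (flow_nonarc fl).
Qed.

Lemma cut_value (f : nd -> nd -> R) (A : {set nd}) : is_flow f ->
  s \in A -> t \notin A ->
  flow_value f = \sum_(u in A) \sum_(w in ~: A) f u w.
Proof.
move=> fl sA tA; have [_ anti cons] := fl.
have E1 : \sum_(u in A) \sum_w f u w = flow_value f.
  rewrite (bigD1 s) //= valueE // big1 ?addr0 // => u /andP[uA us].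
  apply: cons => //; apply: contraNneq tA => <-; exact: uA.
have E2 : \sum_(u in A) \sum_(w in A) f u w = 0.
  set S := (X in X = 0).
  have : S = - S.
    rewrite [in LHS]/S exchange_big /S /= -sumrN; apply: eq_bigr => u _.
    by rewrite -sumrN; apply: eq_bigr => w _; apply: anti.
  move=> H; have : S *+ 2 = 0 by rewrite mulr2n {1}H addNr.
  by move/eqP; rewrite mulrn_eq0 /= => /eqP.
rewrite -E1 (eq_bigr (fun u => \sum_(w in A) f u w + \sum_(w in ~:A) f u w)).
  by rewrite big_split /= E2 add0r.
move=> u _; rewrite (bigID (fun w => w \in A)) /=; congr (_ + _).
by apply: eq_bigl => w; rewrite in_setC.
Qed.


Definition edges (x : nd) (p : seq nd) := zip (x :: p) p.
Definition cnt (x : nd) p (u w : nd) : R := (count (pred1 (u, w)) (edges x p))%:R.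

Lemma sum_pair_l (a b y : nd) : \sum_(w : nd) ((a, b) == (y, w))%:R = (a == y)%:R :> R.
Proof.
rewrite (bigD1 b) //= xpair_eqE eqxx andbT big1 ?addr0 // => w /negbTE wb.
by rewrite xpair_eqE (eq_sym b) wb andbF.
Qed.

Lemma sum_pair_r (a b y : nd) : \sum_(w : nd) ((a, b) == (w, y))%:R = (b == y)%:R :> R.
Proof.
rewrite (bigD1 a) //= xpair_eqE eqxx /= big1 ?addr0 // => w /negbTE wb.
by rewrite xpair_eqE (eq_sym a) wb.
Qed.

Lemma cnt_sum x p y :
  \sum_w (cnt x p y w - cnt x p w y) = (y == x)%:R - (y == last x p)%:R.
Proof.
elim: p x => [|x1 p IH] x.
  by rewrite /= subrr big1 // => w _; rewrite /cnt /edges /= subrr.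
have E : forall u w, cnt x (x1 :: p) u w = ((x, x1) == (u, w))%:R + cnt x1 p u w.
  by move=> u w; rewrite /cnt /edges /= natrD.
rewrite (eq_bigr (fun w => (((x, x1) == (y, w))%:R - ((x, x1) == (w, y))%:R)
   + (cnt x1 p y w - cnt x1 p w y))); last first.
  by move=> w _; rewrite !E; rewrite opprD !addrA; congr (_ + _); rewrite addrAC.
rewrite big_split /= IH sumrB sum_pair_l sum_pair_r /= (eq_sym x1) (eq_sym x).
by rewrite addrA subrK.
Qed.

Lemma cnt_ge0 x p u w : 0 <= cnt x p u w.
Proof. exact: ler0n. Qed.

Lemma cnt_le x p u w : cnt x p u w <= (size p)%:R.
Proof.
rewrite /cnt ler_nat; apply: leq_trans (count_size _ _) _.
by rewrite /edges size_zip /= geq_minr.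
Qed.

Lemma path_edges (r : rel nd) x p : path r x p -> forall u w,
  (0 < count (pred1 (u, w)) (edges x p))%N -> r u w.
Proof.
elim: p x => [|x1 p IH] x //= /andP[rx pp] u w.
rewrite /edges /= -/(edges x1 p); case: eqP => [[<- <-] //|_ /=].
rewrite add0n; exact: IH.
Qed.


Lemma no_aug (f : nd -> nd -> R) : is_max_flow f -> ~~ connect (residual f) s t.
Proof.
move=> [fl fmax]; apply/negP => /connectP [p pp lastp].
pose gap := fun uw : nd * nd =>
  if capH R uw.1 uw.2 is Some c then c - f uw.1 uw.2 else 1.
pose m := \big[Num.min/1]_(uw : nd * nd | residual f uw.1 uw.2) gap uw.
have m_gt0 : 0 < m.
  rewrite /m; elim/big_ind: _ => //.
    by move=> x y ? ?; rewrite lt_min; apply/andP.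
  move=> [u w] /= /andP[_]; rewrite /gap /=.
  by case: (capH R u w) => // c; rewrite subr_gt0.
have m_le : forall u w, residual f u w -> m <= gap (u, w).
  by move=> u w r; apply: (@bigmin_le_cond _ _ _ _ (u, w)).
pose eps := m / (size p).+1%:R.
have eps_gt0 : 0 < eps by rewrite divr_gt0 // ltr0Sn.
have eps_le : eps * (size p)%:R <= m.
  rewrite /eps mulrAC ler_pdivrMr ?ltr0Sn //.
  by apply: ler_wpM2l; [exact: ltW | rewrite ler_nat].
pose g := fun u w => f u w + eps * (cnt s p u w - cnt s p w u).
have gfl : is_flow g.
  have [cap anti cons] := fl; split.
  - move=> u w; rewrite /g.
    case E: (capH R u w) (cap u w) => [c|] //= fc.
    have h2 : 0 <= eps * cnt s p w u by apply: mulr_ge0; [exact: ltW | exact: cnt_ge0].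
    case: (posnP (count (pred1 (u, w)) (edges s p))) => [c0|cpos].
      have c0' : cnt s p u w = 0 by rewrite /cnt c0.
      rewrite c0' mulrBr mulr0; lra.
    have r := path_edges pp cpos.
    have := m_le _ _ r; rewrite /gap /= E => hm.
    have h1 : eps * cnt s p u w <= eps * (size p)%:R.
      by apply: ler_wpM2l; [exact: ltW | exact: cnt_le].
    rewrite mulrBr; lra.
  - by move=> u w; rewrite /g anti; ring.
  - move=> u us ut; rewrite /g big_split /= cons // -mulr_sumr cnt_sum -lastp.
    by rewrite (negbTE us) (negbTE ut) subrr mulr0 addr0.
have st : (s == t) = false by [].
have : flow_value g = flow_value f + eps.
  rewrite -!valueE // /g big_split /= -mulr_sumr cnt_sum -lastp eqxx st /=.
  by rewrite subr0 mulr1.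
move=> E; have := fmax g gfl; rewrite E; lra.
Qed.


Definition pc (v : V) (L : lamT e h) : R :=
  ((v \notin val L) && (v |: val L \in hcliques e h) : nat)%:R.
Definition inner (A : {set nd}) u := \sum_(w in ~: A) capv u w.
Definition cutcap (A : {set nd}) := \sum_(u in A) inner A u.

Lemma capv_lam L w : capv (inr (inr L)) w = 0.
Proof. case: w => [[]|[v|L']]; rewrite /capv /= //; by case: ifP. Qed.

Lemma inner_s (A : {set nd}) : \sum_(w in ~: A) capv s w =
  \sum_v (if inr (inl v) \in A then 0 else (hdeg e h v)%:R).
Proof.
rewrite big_mkcond big_sumType /= big_bool /= big_sumType /=.
have -> : capv s (inl true) = 0 by [].
have -> : capv s (inl false) = 0 by [].
rewrite !if_same !add0r [X in _ + X]big1 ?addr0; last first.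
  by move=> L _; rewrite if_same.
by apply: eq_bigr => v _; rewrite inE; case: (_ \in A).
Qed.

Lemma inner_v (A : {set nd}) v : s \in A -> t \notin A ->
  \sum_(w in ~: A) capv (inr (inl v)) w =
  h%:R * rho_star e h R + \sum_(L | inr (inr L) \notin A) pc v L.
Proof.
move=> sA tA.
rewrite big_mkcond big_sumType /= big_bool /= big_sumType /=.
have sA' : inl true \in A := sA.
have tA' : inl false \in ~: A by rewrite inE.
rewrite inE sA' tA' /= add0r.
have -> : capv (inr (inl v)) (inl false) = h%:R * rho_star e h R by [].
rewrite big1 ?add0r; last by move=> w _; rewrite if_same.
congr (_ + _); rewrite [RHS]big_mkcond; apply: eq_bigr => L _.
rewrite inE; case: (_ \in A) => //=.
rewrite /capv /pc /=; case: (_ && _) => //.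
Qed.


Lemma cutcapE (A : {set nd}) : s \in A -> t \notin A ->
  cutcap A = \sum_v (if inr (inl v) \in A then
     h%:R * rho_star e h R + \sum_(L | inr (inr L) \notin A) pc v L
     else (hdeg e h v)%:R).
Proof.
move=> sA tA.
rewrite /cutcap big_mkcond big_sumType /= big_bool /= big_sumType /=.
have sA' : inl true \in A := sA.
have tA' : (inl false \in A) = false by apply/negbTE.
have L0 : \sum_(L : lamT e h) (if inr (inr L) \in A then inner A (inr (inr L)) else 0) = 0.
  apply: big1 => L _; case: (_ \in A) => //; apply: big1 => w _; exact: capv_lam.
rewrite sA' tA' /= addr0 L0 addr0.
rewrite /inner (inner_s A) -big_split /=; apply: eq_bigr => v _.
case vA: (_ \in A); last by rewrite addr0.
by rewrite add0r (inner_v v sA tA).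
Qed.


Local Notation K := #|hcliques e h|.
Local Notation rs := (rho_star e h R).

Lemma sum_hdeg : \sum_v (hdeg e h v)%:R = (h * K)%:R :> R.
Proof.
rewrite -natr_sum -double_count // => S; rewrite inE => /andP[_ /eqP E]; exact: E.
Qed.

Lemma mu0 : (0 < h)%N -> mu e h set0 = 0%N.
Proof.
move=> hp; apply/eqP; rewrite cards_eq0; apply/eqP/setP => S; rewrite !inE subset0.
apply/negbTE/negP => /andP[/andP[_ /eqP cS] /eqP S0].
by move: cS hp; rewrite S0 cards0 => <-.
Qed.

Lemma rho_bound (W : {set V}) : (0 < h)%N -> (mu e h W)%:R <= #|W|%:R * rs.
Proof.
move=> hp; have [->|nz] := eqVneq W set0; first by rewrite mu0 // cards0 mul0r.
have pos : 0 < #|W|%:R :> R by rewrite ltr0n card_gt0.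
have : rho e h R W <= rho_star e h R by apply: le_bigmax_cond.
rewrite /rho => le.
rewrite -(divfK (lt0r_neq0 pos) (mu e h W)%:R) mulrC.
by apply: ler_wpM2l => //; apply: ltW.
Qed.

Lemma inW0 (W : {set V}) (v : V) : v \notin W -> inW e h W v = 0%N.
Proof.
move=> vW; apply/eqP; rewrite cards_eq0; apply/eqP/setP => S; rewrite !inE.
apply/negbTE; apply/negP => /andP[_ /andP[vS sSW]].
by move: vW; rewrite (subsetP sSW v vS).
Qed.

Lemma key (W : {set V}) : \sum_v (if v \in W then h%:R * rs + (outW e h W v)%:R
                     else (hdeg e h v)%:R) =
  (h * K)%:R + (h%:R * (#|W|%:R * rs) - (h * mu e h W)%:R) :> R.
Proof.
have -> : (h * mu e h W)%:R = \sum_v (inW e h W v)%:R :> R.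
  by rewrite -sum_inW natr_sum.
have -> : h%:R * (#|W|%:R * rs) = \sum_v (if v \in W then h%:R * rs else 0) :> R.
  by rewrite -big_mkcond /= sumr_const -mulr_natr; ring.
rewrite -sum_hdeg -sumrB -big_split /=; apply: eq_bigr => v _.
rewrite (hdeg_split e h W v) natrD.
case vW: (v \in W); last by rewrite (inW0 (negbT vW)) subrr addr0.
by ring.
Qed.

Lemma sub_sum (I : finType) (P Q : pred I) (F : I -> R) :
  (forall i, P i -> Q i) -> (forall i, 0 <= F i) ->
  \sum_(i | P i) F i <= \sum_(i | Q i) F i.
Proof.
move=> PQ F0; rewrite [X in X <= _]big_mkcond [X in _ <= X]big_mkcond.
apply: ler_sum => i _; case Pi: (P i); first by rewrite (PQ i Pi).
by case: (Q i).
Qed.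

Lemma pc_sum (W : {set V}) (v : V) : v \in W ->
  \sum_(L : lamT e h | ~~ (val L \subset W)) pc v L = (outW e h W v)%:R.
Proof. by move=> vW; rewrite -(count_out e h vW) natr_sum. Qed.


Lemma lower_cut (A : {set nd}) : (0 < h)%N -> s \in A -> t \notin A ->
  (forall L, inr (inr L) \in A -> val L \subset [set v | inr (inl v) \in A]) ->
  (h * K)%:R <= cutcap A.
Proof.
move=> hp sA tA cl; set W := [set v | inr (inl v) \in A].
rewrite (cutcapE sA tA).
have step2 : (h * K)%:R <=
   \sum_v (if v \in W then h%:R * rs + (outW e h W v)%:R else (hdeg e h v)%:R).
  rewrite key lerDl natrM -mulrBr; apply: mulr_ge0 => //.
  by rewrite subr_ge0 rho_bound.
apply: (le_trans step2); apply: ler_sum => v _; rewrite inE.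
case vA: (_ \in A) => //; rewrite lerD2l -(pc_sum (W := W) (v := v)) ?inE //.
apply: sub_sum.
  by move=> L nL; apply: contra nL => LA; exact: cl L LA.
by move=> L; exact: ler0n.
Qed.

Lemma upper_cut (V1 : {set V}) : V1 != set0 -> rho e h R V1 = rs ->
  cutcap (s |: V1Lam1 e h V1) = (h * K)%:R.
Proof.
move=> ne dense.
have sA : s \in s |: V1Lam1 e h V1 by rewrite setU11.
have tA : t \notin s |: V1Lam1 e h V1 by rewrite !inE.
rewrite (cutcapE sA tA).
rewrite (eq_bigr (fun v => if v \in V1 then h%:R * rs + (outW e h V1 v)%:R
                          else (hdeg e h v)%:R)); last first.
  move=> v _; have -> : (inr (inl v) \in s |: V1Lam1 e h V1) = (v \in V1).
    by rewrite !inE.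
  case vV: (v \in V1) => //; congr (_ + _); rewrite -pc_sum //.
  by apply: eq_bigl => L; rewrite !inE.
rewrite key [(h * mu e h V1)%:R]natrM.
have pos : 0 < #|V1|%:R :> R by rewrite ltr0n card_gt0.
have -> : (mu e h V1)%:R = #|V1|%:R * rs :> R.
  by rewrite -dense /rho mulrC divfK // lt0r_neq0.
by rewrite subrr addr0.
Qed.


Lemma capH_None (u w : nd) : capH R u w = None ->
  exists L v, [/\ u = inr (inr L), w = inr (inl v) & v \in val L].
Proof.
case: u => [[]|[v|L]]; case: w => [[]|[v'|L']]; try (by move=> /= H; discriminate H).
- by move=> /=; case: ifP.
- by move=> /=; case: ifP => // vL _; exists L, v'.
Qed.

Lemma claim1_sec (e_sym : symmetric e) (e_irr : irreflexive e) (h_ge2 : (2 <= h)%N)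
  (f : nd -> nd -> R) (fmax : is_max_flow f)
  (V1 : {set V}) (V1_ne : V1 != set0) (V1_dense : rho e h R V1 = rho_star e h R)
  (C : {set nd}) (C_nt : nontrivial_component f C) :
  C \subset V1Lam1 e h V1 \/ [disjoint C & V1Lam1 e h V1].
Proof.
have hp : (0 < h)%N by apply: leq_trans h_ge2.
have [fl _] := fmax.
pose r := residual f.
pose A := [set y | connect r s y].
have sA : s \in A by rewrite inE connect0.
have tA : t \notin A by rewrite inE; exact: no_aug.
have resA : forall u w, u \in A -> r u w -> w \in A.
  move=> u w; rewrite !inE => su ruw; exact: connect_trans su (connect1 ruw).
have cl : forall L, inr (inr L) \in A -> val L \subset [set v | inr (inl v) \in A].
  move=> L LA; apply/subsetP => v vL; rewrite inE; apply: resA LA _.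
  have vL' : v \in sval L := vL.
  by rewrite /r /residual /= vL'.
have valA : flow_value f = cutcap A.
  rewrite (cut_value fl sA tA) /cutcap /inner; apply: eq_bigr => u uA.
  apply: eq_bigr => w; rewrite inE => wA.
  have nr : ~~ r u w by apply: contra wA; exact: resA.
  have [cap _ _] := fl.
  move: nr (cap u w); rewrite /r /residual /capv.
  case a: (arcH u w) => /=.
    case E: (capH R u w) => [c|] //= nlt le.
    by apply/eqP; rewrite eq_le le leNgt nlt.
  by move=> _ _; rewrite (flow_nonarc fl (negbT a)) (nonarc_cap (negbT a)).
set S' := s |: V1Lam1 e h V1.
have sS : s \in S' by rewrite setU11.
have tS : t \notin S' by rewrite !inE.
have notNone : forall u w, u \in S' -> w \notin S' -> capH R u w != None.
  move=> u w uS wS; apply/negP => /eqP /capH_None [L [v [eu ew vL]]].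
  move: uS wS; rewrite eu ew !inE /= => LV1; apply/negP/negPn.
  exact: subsetP LV1 v vL.
have le_cap_S : forall u w, u \in S' -> w \notin S' -> f u w <= capv u w.
  by move=> u w uS wS; apply: flow_le_capv fl (notNone u w uS wS).
have valS := cut_value fl sS tS.
have lowA := lower_cut hp sA tA cl.
have upS : cutcap S' = (h * K)%:R := upper_cut V1_ne V1_dense.
have inner_ge0 : forall u, u \in S' -> 0 <= \sum_(w in ~: S') (capv u w - f u w).
  move=> u uS; apply: sumr_ge0 => w; rewrite inE => wS.
  by rewrite subr_ge0 le_cap_S.
pose D := \sum_(u in S') \sum_(w in ~: S') (capv u w - f u w).
have D0 : D = 0.
  have DE : D = cutcap S' - flow_value f.
    rewrite valS /cutcap /inner -sumrB; apply: eq_bigr => u _; by rewrite sumrB.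
  have D_ge0 : 0 <= D by apply: sumr_ge0.
  by apply/eqP; rewrite eq_le D_ge0 andbT DE upS valA subr_le0.
have eqS : forall u w, u \in S' -> w \notin S' -> f u w = capv u w.
  move=> u w uS wS.
  have := psumr_eq0P inner_ge0 D0 uS => I0.
  have nn : forall w', w' \in ~: S' -> 0 <= capv u w' - f u w'.
    by move=> w'; rewrite inE => wS'; rewrite subr_ge0 le_cap_S.
  have wS' : w \in ~: S' by rewrite inE.
  have /eqP := psumr_eq0P nn I0 wS'.
  by rewrite subr_eq0 => /eqP.
have noresS : forall u w, u \in S' -> r u w -> w \in S'.
  move=> u w uS ruw; apply/negPn/negP => wS.
  move: ruw; rewrite /r /residual => /andP[_].
  have := notNone u w uS wS; have := eqS u w uS wS; rewrite /capv.
  by case: (capH R u w) => // c -> _; rewrite ltxx.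
have clo : forall y z, connect r y z -> y \in S' -> z \in S'.
  move=> y z /connectP [p pp ->]; elim: p y pp => [|x p IH] y //= /andP [ryx pp] yS.
  exact: IH pp (noresS _ _ yS ryx).
have [[x CE] [sC tC]] := C_nt.
case: (boolP [disjoint C & V1Lam1 e h V1]) => [d|nd]; [by right | left].
have /set0Pn [y] : C :&: V1Lam1 e h V1 != set0 by rewrite setI_eq0.
rewrite inE => /andP[yC yV].
apply/subsetP => z zC.
move: (yC) (zC); rewrite CE !inE => /andP[_ yx] /andP[xz _].
have : z \in S' by apply: clo (connect_trans yx xz) _; rewrite inE yV orbT.
move/setU1P => [zs|]; last by move=> zV; rewrite inE in zV.
by move: sC; rewrite -zs zC.
Qed.

End Flow.

Theorem claim1 (V : finType) (e : rel V) (h : nat) (R : realFieldType)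
  (e_sym : symmetric e) (e_irr : irreflexive e) (h_ge2 : (2 <= h)%N)
  (f : node e h -> node e h -> R) (fmax : is_max_flow f)
  (V1 : {set V}) (V1_ne : V1 != set0) (V1_dense : rho e h R V1 = rho_star e h R)
  (C : {set node e h}) (C_nt : nontrivial_component f C) :
  C \subset V1Lam1 e h V1 \/ [disjoint C & V1Lam1 e h V1].
Proof. exact: (claim1_sec e_sym e_irr h_ge2 fmax V1_ne V1_dense C_nt). Qed.
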